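(* Let $\Sigma$ be an indexed set and let $\{p_j \mid j \in \Sigma\}$ be pair operations on $\mathcal{P}$. Then $\big(\bigvee_{j \in \Sigma} p_j\big)^{\mathrm{sd}} = \bigwedge_{j \in \Sigma} (p_j^{\mathrm{sd}})$ and $\big(\bigwedge_{j \in \Sigma} p_j\big)^{\mathrm{sd}}=\bigvee_{j \in \Sigma} (p_j^{\mathrm{sd}})$.
   Context: $(R,\mathfrak{m},k)$ is a complete Noetherian commutative local ring, $E=E_R(k)$, $(-)^\vee=\operatorname{Hom}_R(-,E)$, and $\mathcal{P}$ is a class of pairs $(L,M)$, $L\subseteq M$, of Matlis-dualizable $R$-modules closed under ambient isomorphisms. A pair operation assigns to each pair a submodule $p(L,M)\subseteq M$ compatibly with isomorphisms. Join and meet of pair operations: $(\bigvee_j p_j)(L,M) := \sum_j p_j(L,M)$ and $(\bigwedge_j p_j)(L,M) := \bigcap_j p_j(L,M)$. Identifying $(M/N)^\vee$ with $\{g\in M^\vee\mid g(N)=0\}$ and letting $\eta_B:B\to B^{\vee\vee}$ be the Matlis duality isomorphism, the smile dual is $p^{\mathrm{sd}}(A,B) := \eta_B^{-1}\big((B^\vee / p((B/A)^\vee,B^\vee))^\vee\big)$, defined on $\mathcal{P}^\vee=\{(A,B)\mid ((B/A)^\vee,B^\vee)\in\mathcal{P}\}$. *)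

(* Defs.v *)
From HB Require Import structures.
From mathcomp Require Import all_boot all_algebra.
From mathcomp Require Import boolp.
Set Implicit Arguments.
Unset Strict Implicit.
Unset Printing Implicit Defensive.
Import GRing.Theory.
Local Open Scope ring_scope.

Section RingDefs.
Variable R : comNzRingType.

Definition is_ideal (I : R -> Prop) : Prop :=
  [/\ I 0, (forall x y, I x -> I y -> I (x + y)) & (forall r x, I x -> I (r * x))].

Definition fg_ideal (I : R -> Prop) : Prop :=
  exists s : seq R, (forall i : 'I_(size s), I s`_i) /\
    forall x, I x -> exists c : 'I_(size s) -> R, x = \sum_(i < size s) c i * s`_i.

Definition noetherian_ring : Prop := forall I, is_ideal I -> fg_ideal I.

Definition local_ring_with (m : R -> Prop) : Prop :=
  [/\ is_ideal m, ~ m 1 & forall x, ~ m x -> exists y, x * y = 1].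

Fixpoint ideal_pow (m : R -> Prop) (n : nat) : R -> Prop :=
  match n with
  | 0 => fun _ => True
  | n'.+1 => fun x => exists k (a b : 'I_k -> R),
      (forall i, m (a i) /\ ideal_pow m n' (b i)) /\ x = \sum_(i < k) a i * b i
  end.

(* m-adic completeness (Hausdorffness follows from Krull's theorem for
   Noetherian local rings) *)
Definition madic_complete (m : R -> Prop) : Prop :=
  forall x : nat -> R, (forall n, ideal_pow m n (x n.+1 - x n)) ->
    exists y, forall n, ideal_pow m n (y - x n).

End RingDefs.

Section ModDefs.
Variable R : comNzRingType.

Definition is_lin (M N : lmodType R) (f : M -> N) : Prop :=
  forall (a : R) x y, f (a *: x + y) = a *: f x + f y.

Definition is_submod (M : lmodType R) (S : M -> Prop) : Prop :=
  S 0 /\ forall (a : R) x y, S x -> S y -> S (a *: x + y).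

Definition img (M N : lmodType R) (f : M -> N) (S : M -> Prop) : N -> Prop :=
  fun y => exists2 x, S x & f x = y.

Definition mod_iso (M N : lmodType R) (f : M -> N) : Prop :=
  is_lin f /\ bijective f.

Definition injective_module (E : lmodType R) : Prop :=
  forall (A B : lmodType R) (i : A -> B) (f : A -> E),
    is_lin i -> injective i -> is_lin f ->
    exists2 g : B -> E, is_lin g & forall a, g (i a) = f a.

(* E = E_R(k), k = R/m: E is injective and contains an essential
   submodule R e with ann(e) = m, i.e. R e ~= R/m = k. *)
Definition injective_hull_residue (m : R -> Prop) (E : lmodType R) : Prop :=
  injective_module E /\
  exists e : E, (forall r : R, r *: e = 0 <-> m r) /\
    forall S : E -> Prop, is_submod S -> (exists2 x, S x & x <> 0) ->
      exists r : R, S (r *: e) /\ r *: e <> 0.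

End ModDefs.

Section Dual.
Variables (R : comNzRingType) (E M : lmodType R).

Definition dual := {f : M -> E | is_lin f}.

Definition dfun (g : dual) : M -> E := proj1_sig g.

Lemma dual_eq (f g : dual) : (forall x, dfun f x = dfun g x) -> f = g.
Proof.
case: f g => [f fl] [g gl] /= H.
have efg : f = g by apply: funext.
subst g; congr exist; exact: Prop_irrelevance.
Qed.

HB.instance Definition _ := gen_eqMixin dual.
HB.instance Definition _ := gen_choiceMixin dual.

Lemma lin0 : is_lin (fun _ : M => (0 : E)).
Proof. by move=> a x y; rewrite scaler0 addr0. Qed.

Lemma linD (f g : dual) : is_lin (fun x => dfun f x + dfun g x).
Proof.
case: f g => [f fl] [g gl] a x y /=.
by rewrite fl gl scalerDr addrACA.
Qed.

Lemma linN (f : dual) : is_lin (fun x => - dfun f x).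
Proof. by case: f => [f fl] a x y /=; rewrite fl opprD scalerN. Qed.

Lemma linZ (r : R) (f : dual) : is_lin (fun x => r *: dfun f x).
Proof.
case: f => [f fl] a x y /=.
by rewrite fl scalerDr !scalerA mulrC.
Qed.

Definition dzero : dual := exist _ _ lin0.
Definition dadd (f g : dual) : dual := exist _ _ (linD f g).
Definition dopp (f : dual) : dual := exist _ _ (linN f).
Definition dscale (r : R) (f : dual) : dual := exist _ _ (linZ r f).

Lemma daddA : associative dadd.
Proof. by move=> f g h; apply: dual_eq => x /=; rewrite addrA. Qed.
Lemma daddC : commutative dadd.
Proof. by move=> f g; apply: dual_eq => x /=; rewrite addrC. Qed.
Lemma dadd0 : left_id dzero dadd.
Proof. by move=> f; apply: dual_eq => x /=; rewrite add0r. Qed.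
Lemma daddN : left_inverse dzero dopp dadd.
Proof. by move=> f; apply: dual_eq => x /=; rewrite addNr. Qed.

HB.instance Definition _ := GRing.isZmodule.Build dual daddA daddC dadd0 daddN.

Lemma dscaleA a b (f : dual) : dscale a (dscale b f) = dscale (a * b) f.
Proof. by apply: dual_eq => x /=; rewrite scalerA. Qed.
Lemma dscale1 : left_id 1 dscale.
Proof. by move=> f; apply: dual_eq => x /=; rewrite scale1r. Qed.
Lemma dscaleDr : right_distributive dscale (@GRing.add dual).
Proof. by move=> a f g; apply: dual_eq => x /=; rewrite scalerDr. Qed.
Lemma dscaleDl (f : dual) : {morph dscale^~ f : a b / a + b}.
Proof. by move=> a b; apply: dual_eq => x /=; rewrite scalerDl. Qed.

HB.instance Definition _ :=
  GRing.Zmodule_isLmodule.Build R dual dscaleA dscale1 dscaleDr dscaleDl.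

End Dual.

Section Matlis.
Variables (R : comNzRingType) (E : lmodType R).

(* eta_M : M -> M^vv, m |-> (g |-> g m), is an isomorphism *)
Definition matlis_dualizable (M : lmodType R) : Prop :=
  (forall b : M, (forall g : dual E M, dfun g b = 0) -> b = 0) /\
  (forall phi : dual E (dual E M), exists b : M,
     forall g : dual E M, dfun phi g = dfun g b).

(* A class of pairs (L, M), L a submodule of M (given as a subset). *)
Definition pair_class := forall M : lmodType R, (M -> Prop) -> Prop.
Definition pair_op_fun := forall M : lmodType R, (M -> Prop) -> (M -> Prop).

Definition good_pair_class (P : pair_class) : Prop :=
  (forall M L, P M L -> is_submod L /\ matlis_dualizable M) /\
  (forall (M N : lmodType R) (f : M -> N) L,
     mod_iso f -> P M L -> P N (img f L)).

Definition pair_operation (P : pair_class) (p : pair_op_fun) : Prop :=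
  (forall M L, P M L -> is_submod (p M L)) /\
  (forall (M N : lmodType R) (f : M -> N) L, mod_iso f -> P M L ->
     forall y, p N (img f L) y <-> img f (p M L) y).

Definition op_join (I : Type) (p : I -> pair_op_fun) : pair_op_fun :=
  fun M L x => exists n (j : 'I_n -> I) (v : 'I_n -> M),
    (forall k, p (j k) M L (v k)) /\ x = \sum_(k < n) v k.

Definition op_meet (I : Type) (p : I -> pair_op_fun) : pair_op_fun :=
  fun M L x => forall i, p i M L x.

(* (M/N)^v identified with {g in M^v | g(N) = 0} *)
Definition annihilator (M : lmodType R) (A : M -> Prop) : dual E M -> Prop :=
  fun g => forall x, A x -> dfun g x = 0.

(* eta_B^{-1}((B^v / G)^v) = {b in B | g b = 0 for all g in G} *)
Definition perp (M : lmodType R) (G : dual E M -> Prop) : M -> Prop :=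
  fun b => forall g, G g -> dfun g b = 0.

(* P^v = {(A,B) | ((B/A)^v, B^v) in P} *)
Definition dual_class (P : pair_class) : pair_class :=
  fun B A => is_submod A /\ P (dual E B) (annihilator A).

Definition smile_dual (p : pair_op_fun) : pair_op_fun :=
  fun B A => perp (p (dual E B) (annihilator A)).

End Matlis.

(* Main.v *)
Require Import Defs.
From HB Require Import structures.
From mathcomp Require Import all_boot all_algebra.
Local Open Scope ring_scope.
From mathcomp Require Import boolp.
Set Implicit Arguments. Unset Strict Implicit. Unset Printing Implicit Defensive.
Import GRing.Theory.
Local Open Scope ring_scope.

Section Sub.
Variables (R : comNzRingType) (N : lmodType R) (Q : N -> Prop) (HQ : is_submod Q).
Definition subm of is_submod Q := {x : N | Q x}.
Local Notation S := (subm HQ).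
HB.instance Definition _ := gen_eqMixin S.
HB.instance Definition _ := gen_choiceMixin S.
Lemma subm_eq (x y : S) : proj1_sig x = proj1_sig y -> x = y.
Proof. case: x y => [x hx] [y hy] /= e; subst y; congr exist; exact: Prop_irrelevance. Qed.
Lemma Q0 : Q 0. Proof. by case: HQ. Qed.
Lemma QZ a x y : Q x -> Q y -> Q (a *: x + y). Proof. by case: HQ => _; apply. Qed.
Lemma QD x y : Q x -> Q y -> Q (x + y). Proof. by move=> hx hy; have := QZ 1 hx hy; rewrite scale1r. Qed.
Lemma QN x : Q x -> Q (- x). Proof. by move=> hx; have := QZ (-1) hx Q0; rewrite addr0 scaleN1r. Qed.
Lemma QS a x : Q x -> Q (a *: x). Proof. by move=> hx; have := QZ a hx Q0; rewrite addr0. Qed.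
Definition szero : S := exist _ 0 Q0.
Definition sadd (x y : S) : S := exist _ _ (QD (proj2_sig x) (proj2_sig y)).
Definition sopp (x : S) : S := exist _ _ (QN (proj2_sig x)).
Definition sscale a (x : S) : S := exist _ _ (QS a (proj2_sig x)).
Lemma saddA : associative sadd. Proof. by move=> *; apply: subm_eq; rewrite /= addrA. Qed.
Lemma saddC : commutative sadd. Proof. by move=> *; apply: subm_eq; rewrite /= addrC. Qed.
Lemma sadd0 : left_id szero sadd. Proof. by move=> *; apply: subm_eq; rewrite /= add0r. Qed.
Lemma saddN : left_inverse szero sopp sadd. Proof. by move=> *; apply: subm_eq; rewrite /= addNr. Qed.
HB.instance Definition _ := GRing.isZmodule.Build S saddA saddC sadd0 saddN.
Lemma sscaleA a b (f : S) : sscale a (sscale b f) = sscale (a * b) f.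
Proof. by apply: subm_eq; rewrite /= scalerA. Qed.
Lemma sscale1 : left_id 1 sscale. Proof. by move=> f; apply: subm_eq; rewrite /= scale1r. Qed.
Lemma sscaleDr : right_distributive sscale (@GRing.add S).
Proof. by move=> a f g; apply: subm_eq; rewrite /= scalerDr. Qed.
Lemma sscaleDl (f : S) : {morph sscale^~ f : a b / a + b}.
Proof. by move=> a b; apply: subm_eq; rewrite /= scalerDl. Qed.
HB.instance Definition _ := GRing.Zmodule_isLmodule.Build R S sscaleA sscale1 sscaleDr sscaleDl.
Lemma sval_lin : is_lin (fun x : S => proj1_sig x). Proof. by []. Qed.
Lemma sval_inj : injective (fun x : S => proj1_sig x). Proof. by move=> x y; apply: subm_eq. Qed.
End Sub.
From Stdlib Require Import Classical.

Lemma dfunD (R : comNzRingType) (E M : lmodType R) (f g : dual E M) x :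
  dfun (f + g) x = dfun f x + dfun g x.
Proof. by []. Qed.
Lemma dfunZ (R : comNzRingType) (E M : lmodType R) a (f : dual E M) x :
  dfun (a *: f) x = a *: dfun f x.
Proof. by []. Qed.
Lemma dfun0 (R : comNzRingType) (E M : lmodType R) x :
  dfun (0 : dual E M) x = 0.
Proof. by []. Qed.
Lemma dfun_sum (R : comNzRingType) (E M : lmodType R) n (v : 'I_n -> dual E M) x :
  dfun (\sum_(k < n) v k) x = \sum_(k < n) dfun (v k) x.
Proof.
elim: n v => [|n IH] v; first by rewrite !big_ord0.
by rewrite !big_ord_recr dfunD IH.
Qed.
Lemma lin_0 (R : comNzRingType) (M N : lmodType R) (f : M -> N) : is_lin f -> f 0 = 0.
Proof.
move=> hf; have := hf 1 0 0; rewrite !scale1r addr0 => /eqP.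
by rewrite -subr_eq0 opprD addrA subrr add0r oppr_eq0 => /eqP.
Qed.
Lemma lin_D (R : comNzRingType) (M N : lmodType R) (f : M -> N) : is_lin f -> forall x y, f (x + y) = f x + f y.
Proof. by move=> hf x y; have := hf 1 x y; rewrite !scale1r. Qed.
Lemma lin_Z (R : comNzRingType) (M N : lmodType R) (f : M -> N) : is_lin f -> forall a x, f (a *: x) = a *: f x.
Proof. by move=> hf a x; have := hf a x 0; rewrite !addr0 lin_0 // addr0. Qed.
Lemma lin_sum (R : comNzRingType) (M N : lmodType R) (f : M -> N) : is_lin f ->
  forall n (v : 'I_n -> M), f (\sum_(k < n) v k) = \sum_(k < n) f (v k).
Proof.
move=> hf; elim=> [|n IH] v; first by rewrite !big_ord0 lin_0.
by rewrite !big_ord_recr /= lin_D // IH.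
Qed.
Lemma dfun_lin (R : comNzRingType) (E M : lmodType R) (g : dual E M) : is_lin (dfun g).
Proof. by case: g. Qed.

Section Sep.
Variables (R : comNzRingType) (m : R -> Prop) (E : lmodType R).
Hypothesis Hloc : local_ring_with m.
Hypothesis HE : injective_hull_residue m E.

Lemma sep (N : lmodType R) (S : N -> Prop) (HS : is_submod S) (x : N) :
  ~ S x -> exists psi : dual E N, (forall s, S s -> dfun psi s = 0) /\ dfun psi x <> 0.
Proof.
move=> nSx.
case: HE => Einj [e [he _]].
case: Hloc => mid m1 munit.
have key : forall r, S (r *: x) -> m r.
  move=> r Srx; apply: NNPP => nmr; case: (munit r nmr) => y ry.
  apply: nSx; have := QS HS y Srx; by rewrite scalerA mulrC ry scale1r.
pose Q := fun y : N => exists p : N * R, S p.1 /\ y = p.1 + p.2 *: x.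
have HQ : is_submod Q.
  split; first by exists (0, 0); rewrite /= scale0r addr0; split => //; case: HS.
  move=> a y z [[s1 r1] [/= S1 ->]] [[s2 r2] [/= S2 ->]].
  exists (a *: s1 + s2, a * r1 + r2); split; first exact: QZ.
  by rewrite /= scalerDr scalerDl scalerA !addrA; congr (_ + _); rewrite addrAC.
pose A := subm HQ.
pose f := fun y : A => (projT1 (cid (proj2_sig y))).2 *: e.
have frep : forall (y : A) s r, S s -> proj1_sig y = s + r *: x -> f y = r *: e.
  move=> y s r Ss ey; rewrite /f; case: (cid _) => [[s' r'] [/= S' e']].
  apply/eqP; rewrite -subr_eq0 -scalerBl; apply/eqP; apply/he; apply: key.
  have -> : (r' - r) *: x = s - s'.
    have H : s' + r' *: x = s + r *: x by rewrite -e' -ey.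
    by rewrite scalerBl -[r' *: x](addKr s') H addrA addrK addrC.
  by have := QZ HS (-1) S' Ss; rewrite scaleN1r addrC.
have flin : is_lin f.
  move=> a y z.
  case: (proj2_sig y) => [[s1 r1] [/= S1 e1]].
  case: (proj2_sig z) => [[s2 r2] [/= S2 e2]].
  rewrite (frep y _ _ S1 e1) (frep z _ _ S2 e2).
  rewrite (frep _ (a *: s1 + s2) (a * r1 + r2)); first by rewrite scalerDl scalerA.
    exact: QZ.
  rewrite /= e1 e2 scalerDr scalerDl scalerA !addrA; congr (_ + _); by rewrite addrAC.
case: (Einj _ _ _ f (@sval_lin _ _ _ HQ) (@sval_inj _ _ _ HQ) flin) => g glin gf.
exists (exist _ g glin); split => /=.
  move=> s Ss.
  have Qs : Q s by exists (s, 0); rewrite /= scale0r addr0.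
  have := gf (exist _ s Qs) => /= ->.
  by rewrite (frep (exist _ s Qs) s 0 Ss) /= ?scale0r ?addr0.
have Qx : Q x by exists (0, 1); rewrite /= scale1r add0r; split => //; case: HS.
have := gf (exist _ x Qx) => /= ->.
rewrite (frep (exist _ x Qx) 0 1) /= ?scale1r ?add0r //; last by case: HS.
by move=> H0; apply: m1; apply/he; rewrite scale1r.
Qed.
End Sep.

Lemma split_l m n (i : 'I_m) : split (lshift n i) = inl i.
Proof. exact: (@unsplitK m n (inl i)). Qed.
Lemma split_r m n (i : 'I_n) : split (rshift m i) = inr i.
Proof. exact: (@unsplitK m n (inr i)). Qed.
Lemma I0_empty (k : 'I_0) : False. Proof. by case: k. Qed.

Lemma join_submod (R : comNzRingType) (I : Type) (q : I -> pair_op_fun R)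
  (M : lmodType R) (L : M -> Prop) :
  (forall i, is_submod (q i M L)) -> is_submod (op_join q L).
Proof.
move=> Hq; split.
  exists 0, (fun k => False_rect _ (I0_empty k)), (fun k => False_rect _ (I0_empty k)).
  by split; [move=> k; case: (I0_empty k) | rewrite big_ord0].
move=> a x y [n1 [j1 [v1 [h1 ->]]]] [n2 [j2 [v2 [h2 ->]]]].
exists (n1 + n2), (fun k => match split k with inl i => j1 i | inr i => j2 i end),
  (fun k => match split k with inl i => a *: v1 i | inr i => v2 i end).
split.
  move=> k; case: (split k) => i; last exact: h2.
  exact: (QS (Hq (j1 i))).
rewrite big_split_ord scaler_sumr; congr (_ + _); apply: eq_bigr => i _.
  by rewrite split_l.
by rewrite split_r.
Qed.

Definition ev (R : comNzRingType) (E B : lmodType R) (b : B) : dual E (dual E B) :=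
  @exist _ (fun f : dual E B -> E => is_lin f) (fun g => dfun g b) (fun a g1 g2 => erefl).

Section Main.
Variables (R : comNzRingType) (m : R -> Prop) (E : lmodType R).
Hypothesis Hloc : local_ring_with m.
Hypothesis HE : injective_hull_residue m E.

Lemma eta_surj (B : lmodType R) : matlis_dualizable E (dual E B) ->
  forall phi : dual E (dual E B), exists b, forall g, dfun phi g = dfun g b.
Proof.
move=> [Hinj Hsurj] phi; apply: NNPP => nex.
pose S := fun th : dual E (dual E B) => exists b, forall g, dfun th g = dfun g b.
have HS : is_submod S.
  split; first by exists 0 => g; rewrite dfun0 (lin_0 (dfun_lin g)).
  move=> a t1 t2 [b1 h1] [b2 h2]; exists (a *: b1 + b2) => g.
  by rewrite dfunD dfunZ h1 h2 (dfun_lin g).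
case: (sep Hloc HE HS nex) => psi [k nz].
case: (Hsurj psi) => h hh.
have h0 : h = 0.
  apply: dual_eq => b; rewrite dfun0.
  transitivity (dfun (ev E b) h) => //; rewrite -hh; apply: k; by exists b.
by apply: nz; rewrite hh h0 (lin_0 (dfun_lin phi)).
Qed.

Lemma ann_perp (B : lmodType R) : matlis_dualizable E (dual E B) ->
  forall U : dual E B -> Prop, is_submod U ->
  forall g, annihilator (perp U) g -> U g.
Proof.
move=> HB U HU g Hg; apply: NNPP => nU.
case: (sep Hloc HE HU nU) => phi [k nz].
case: (eta_surj HB phi) => b hb.
apply: nz; rewrite hb; apply: Hg => u Uu; rewrite -hb; exact: k.
Qed.
End Main.

Theorem proposition6p9
  (R : comNzRingType) (m : R -> Prop) (E : lmodType R)
  (Hnoeth : noetherian_ring R) (Hloc : local_ring_with m)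
  (Hcompl : madic_complete m) (HE : injective_hull_residue m E)
  (P : pair_class R) (HP : good_pair_class E P)
  (Sigma : Type) (p : Sigma -> pair_op_fun R)
  (Hp : forall j, pair_operation P (p j)) :
  (forall (B : lmodType R) (A : B -> Prop), dual_class E P A ->
     forall b : B, smile_dual E (op_join p) A b <->
                   op_meet (fun j => smile_dual E (p j)) A b) /\
  (forall (B : lmodType R) (A : B -> Prop), dual_class E P A ->
     forall b : B, smile_dual E (op_meet p) A b <->
                   op_join (fun j => smile_dual E (p j)) A b).
Proof.
split.
  move=> B A HA b; split.
    move=> H j g Hg; apply: H.
    exists 1, (fun _ => j), (fun _ => g); split => //.
    by rewrite big_ord1.
  move=> H g [n [j [v [hv ->]]]].
  rewrite dfun_sum big1 // => k _; exact: H.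
move=> B A [HA PA] b.
have HB : matlis_dualizable E (dual E B) by case: (proj1 HP _ _ PA).
have HU : forall j, is_submod (p j (dual E B) (annihilator A)).
  by move=> j; exact: (proj1 (Hp j) _ _ PA).
have Hperp : forall j, is_submod (smile_dual E (p j) A).
  move=> j; split; first by move=> g _; exact: (lin_0 (dfun_lin g)).
  by move=> a x y hx hy g hg; rewrite (dfun_lin g) hx // hy // scaler0 addr0.
have HW := @join_submod _ _ (fun j => smile_dual E (p j)) B A Hperp.
split; last first.
  move=> [n [j [v [hv ->]]]] g hg.
  rewrite (lin_sum (dfun_lin g)) big1 // => k _; exact: (hv k g (hg (j k))).
move=> Hb; apply: NNPP => nW.
case: (sep Hloc HE HW nW) => g [k nz].
apply: nz; apply: Hb => j.
apply: (ann_perp Hloc HE HB (HU j)) => x hx.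
apply: k; exists 1, (fun _ => j), (fun _ => x); split => //.
by rewrite big_ord1.
Qed.
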